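(* For $n\ge1$, any Sherali–Adams refutation of the binary $\mathrm{PHP}^{n+1}_n$ has to contain at least $\left(\frac65\right)^{n/16}-1$ terms.
   Context: Binary Pigeonhole Principle $\mathrm{PHP}^{m}_n$: pigeons $[m]$, holes $[n]$, $r=\lceil\log_2 n\rceil$, each hole $a$ given a distinct $r$-bit representation $a_1\dots a_r$. Variables $P_{i,j}$ ($i\in[m]$, $j\in[r]$); $X^1=X$, $X^0=\neg X$. Clauses: for every hole $a$ and pigeons $i\ne i'$, $\bigvee_{j}P_{i,j}^{1-a_j}\vee\bigvee_j P_{i',j}^{1-a_j}$; and if $n$ is not a power of $2$, for each pigeon $i$ and each $r$-bit string $c$ representing no hole, $\bigvee_j P_{i,j}^{1-c_j}$. Sherali–Adams (SA): for every conjunction $D$ of literals (as a set; $\emptyset$ empty) there is a real variable (term) $Z_D$, $Z_\emptyset=1$. Lifts by $D$: of a clause $l_1\vee\dots\vee l_t$, $Z_{l_1\wedge D}+\dots+Z_{l_t\wedge D}\ge Z_D$; of negation equalities, $Z_{v\wedge D}+Z_{\neg v\wedge D}=Z_D$; of bounds, $0\le Z_{l\wedge D}\le Z_D$. An SA refutation is a set of such lifted constraints (by conjunctions of any size) with empty common real solution set; the terms it contains are the variables $Z_D$ occurring in its constraints. *)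

(* Defs.v *)
From mathcomp Require Import all_boot all_order all_algebra.
From mathcomp Require Import reals exp.
From Stdlib Require List.
Set Implicit Arguments. Unset Strict Implicit. Unset Printing Implicit Defensive.
Import Order.TTheory GRing.Theory Num.Theory.
Local Open Scope ring_scope.

(* Binary PHP^m_n : pigeons 'I_m, holes 'I_n, r = ceil(log2 n) = up_log 2 n bits. *)
Definition nbits (n : nat) : nat := up_log 2 n.

Definition var (m n : nat) := ('I_m * 'I_(nbits n))%type.
(* literal (v, true) = v,  (v, false) = ~ v *)
Definition lit (m n : nat) := (var m n * bool)%type.
Definition bits (n : nat) := {ffun 'I_(nbits n) -> bool}.

(* the disjunction \/_j P_{i,j}^{1 - c_j}, as a list of literals *)
Definition pig_block (m n : nat) (i : 'I_m) (c : bits n) : seq (lit m n) :=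
  [seq ((i, j), ~~ c j) | j <- enum 'I_(nbits n)].

Definition php_clause (m n : nat) (enc : 'I_n -> bits n) (C : seq (lit m n)) : Prop :=
  (exists (a : 'I_n) (i i' : 'I_m),
      i != i' /\ C = pig_block i (enc a) ++ pig_block i' (enc a))
  \/ ((n != 2 ^ nbits n)%N /\
      exists (i : 'I_m) (c : bits n), c \notin codom enc /\ C = pig_block i c).

(* lifted constraints; conjunctions D are finite sets of literals *)
Inductive constr (m n : nat) :=
  | CClause of seq (lit m n) & {set lit m n}
  | CNeg of var m n & {set lit m n}
  | CBound of lit m n & {set lit m n}.

Definition valid_constr (m n : nat) (enc : 'I_n -> bits n) (c : constr m n) : Prop :=
  match c with
  | CClause C _ => php_clause enc C
  | _ => True
  end.

Definition sat_constr (R : realType) (m n : nat) (Z : {set lit m n} -> R)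
    (c : constr m n) : Prop :=
  match c with
  | CClause C D => Z D <= \sum_(l <- C) Z (l |: D)
  | CNeg v D => Z ((v, true) |: D) + Z ((v, false) |: D) = Z D
  | CBound l D => 0 <= Z (l |: D) <= Z D
  end.

Definition constr_terms (m n : nat) (c : constr m n) : {set {set lit m n}} :=
  match c with
  | CClause C D => D |: [set l |: D | l in C]
  | CNeg v D => [set D; (v, true) |: D; (v, false) |: D]
  | CBound l D => [set D; l |: D]
  end.

Definition SA_terms (m n : nat) (cs : seq (constr m n)) : {set {set lit m n}} :=
  \bigcup_(c <- cs) constr_terms c.

Definition SA_refutation (R : realType) (m n : nat) (enc : 'I_n -> bits n)
    (cs : seq (constr m n)) : Prop :=
  (forall c, List.In c cs -> valid_constr enc c) /\
  ~ (exists Z : {set lit m n} -> R,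
        Z set0 = 1 /\ forall c, List.In c cs -> sat_constr Z c).

(* Main.v *)
Require Import Defs.
From mathcomp Require Import all_boot all_order all_algebra.
From mathcomp Require Import reals exp.
From mathcomp Require Import sequences all_fingroup zify ring lra.
Set Implicit Arguments. Unset Strict Implicit. Unset Printing Implicit Defensive.

Section PS.
Variables (n : nat) (enc : 'I_n -> bits n).
Hypothesis enc_inj : injective enc.
Local Notation pig := 'I_n.+1.
Local Notation L := (lit n.+1 n).

Definition encx (x : pig) : bits n :=
  if insub (val x) is Some h then enc h else [ffun _ => false].

Lemma encx_inj (x y : pig) : (x < n)%N -> (y < n)%N -> encx x = encx y -> x = y.
Proof.
move=> xn yn; rewrite /encx.
case: insubP => [hx _ hxv|]; last by rewrite xn.
case: insubP => [hy _ hyv|]; last by rewrite yn.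
by move/enc_inj => hxy; apply: val_inj; rewrite -hxv -hyv hxy.
Qed.

Definition dummy : pig := ord_max.

Lemma neq_dummy (x : pig) : (x != dummy) = (x < n)%N.
Proof.
apply/idP/idP => [|xn]; last by apply/eqP => xd; move: xn; rewrite xd /= ltnn.
by move: (ltn_ord x); rewrite ltnS leq_eqVlt => /orP [/eqP xe|//]; rewrite -val_eqE /= xe eqxx.
Qed.

Variable H : {set pig}.
Definition autoT (j : 'I_(nbits n)) (b : bool) := [forall x in H, encx x j == b].
Definition litT (x : pig) (l : L) :=
  if (x < n)%N then encx x l.1.2 == l.2 else autoT l.1.2 l.2.
Definition satp (pi : {perm pig}) (D : {set L}) :=
  [forall l in D, litT (pi l.1.1) l].

Lemma satpU1 pi l D : satp pi (l |: D) = litT (pi l.1.1) l && satp pi D.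
Proof.
apply/forall_inP/andP => [H1|[H1 H2] x].
  split; first by apply: H1; rewrite setU11.
  by apply/forall_inP => x xD; apply: H1; rewrite setU1r.
by rewrite in_setU1 => /orP [/eqP ->|xD] //; exact: (forall_inP H2).
Qed.

Variables (s0 : {perm pig}) (P : {set pig}).
Definition Pi := [set pi : {perm pig} | [forall p in P, pi p == s0 p]].
Definition relv (D : {set L}) := [set p : pig | (p \notin P) &&
   [exists l in D, (l.1.1 == p) && ~~ autoT l.1.2 l.2]].
Definition cq D q := #|[set pi in Pi | satp pi D && (pi q == dummy)]|.
Definition cD D := if [pick q | (q \notin P) && (q \notin relv D)] is Some q then cq D q else 0%N.
Definition killed (D : {set L}) := [exists l in D, (l.1.1 \in P) && ~~ litT (s0 l.1.1) l].

Hypothesis I1 : forall p, p \in P -> (s0 p < n)%N.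
Hypothesis I2 : forall x : pig, (x < n)%N -> x \notin s0 @: P -> x \in H.

Lemma Pi_notin pi q : pi \in Pi -> q \notin P -> pi q \notin s0 @: P.
Proof.
rewrite inE => /forall_inP piP qP; apply/imsetP => [[p pP]].
by rewrite -(eqP (piP p pP)) => /perm_inj qp; move: qP; rewrite qp pP.
Qed.

Lemma litT_auto pi q l : pi \in Pi -> q \notin P -> autoT l.1.2 l.2 -> litT (pi q) l.
Proof.
move=> piP qP au; rewrite /litT; case: ifP => // qn.
by apply: (forall_inP au); apply: I2 => //; exact: Pi_notin.
Qed.

Lemma notin_rel D q l : q \notin P -> q \notin relv D -> l \in D -> l.1.1 = q -> autoT l.1.2 l.2.
Proof.
move=> qP qr lD lq; apply/negPn/negP => na; move/negP: qr; apply.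
rewrite inE qP /=; apply/exists_inP; exists l => //; rewrite lq eqxx //.
Qed.

Lemma swap_cq D q q' : q \notin P -> q' \notin P -> q \notin relv D -> q' \notin relv D ->
  cq D q = cq D q'.
Proof.
move=> qP q'P qr q'r.
have key : forall a b, a \notin P -> b \notin P -> a \notin relv D -> b \notin relv D ->
    (cq D a <= cq D b)%N.
  move=> a b aP bP ar br; rewrite /cq.
  rewrite -(card_imset _ (mulgI (tperm a b))).
  apply: subset_leq_card; apply/subsetP => x /imsetP [pi].
  rewrite inE => /andP [piPi /andP [spi pia]] ->.
  have tPi : (tperm a b * pi)%g \in Pi.
    rewrite inE; apply/forall_inP => p pP; rewrite permM tpermD.
    - by move: piPi; rewrite inE => /forall_inP ->.
    - by apply/eqP => ap; move: aP; rewrite ap pP.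
    - by apply/eqP => bp; move: bP; rewrite bp pP.
  rewrite inE tPi /= permM tpermR pia andbT.
  apply/forall_inP => l lD; rewrite permM.
  case: (tpermP a b l.1.1) => [la|lb|la lb].
  - apply: litT_auto => //; apply: notin_rel aP ar lD la.
  - apply: litT_auto => //; apply: notin_rel bP br lD lb.
  - exact: (forall_inP spi).
by apply/eqP; rewrite eqn_leq !key.
Qed.

Lemma cD_eq D q : q \notin P -> q \notin relv D -> cD D = cq D q.
Proof.
move=> qP qr; rewrite /cD; case: pickP => [q' /andP [q'P q'r]|/(_ q)].
  exact: swap_cq.
by rewrite qP qr.
Qed.

Lemma killed_cq D q : killed D -> cq D q = 0%N.
Proof.
move=> /exists_inP [l lD /andP [lP nl]]; apply/eqP; rewrite cards_eq0; apply/eqP/setP => pi.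
rewrite inE in_set0; apply/negP => /andP [piPi /andP [spi _]].
move: (forall_inP spi l lD); move: piPi; rewrite inE => /forall_inP /(_ _ lP) /eqP ->.
by rewrite (negbTE nl).
Qed.

Lemma killed_cD D : killed D -> cD D = 0%N.
Proof. by rewrite /cD => kD; case: pickP => // q _; exact: killed_cq. Qed.

Lemma killedU1 D l : killed D -> killed (l |: D).
Proof.
move=> /exists_inP [x xD xP]; apply/exists_inP; exists x => //; exact: setU1r.
Qed.

Lemma relU1 D l : relv (l |: D) \subset l.1.1 |: relv D.
Proof.
apply/subsetP => p; rewrite !inE => /andP [pP /exists_inP [x]].
rewrite in_setU1 => /orP [/eqP ->|xD] /andP [/eqP xp ax]; first by rewrite xp eqxx.
apply/orP; right; rewrite pP /=; apply/exists_inP; exists x => //; rewrite xp eqxx //.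
Qed.

Lemma notin_relU1 D l q : q \notin relv D -> q != l.1.1 -> q \notin relv (l |: D).
Proof.
move=> qr ql; apply/negP => /(subsetP (relU1 D l)); rewrite in_setU1 (negbTE ql) /=.
by apply/negP.
Qed.


Lemma card_cover (X : finType) (C : seq L) (f : L -> {set X}) (S : {set X}) :
  (forall y, y \in S -> exists2 x, x \in C & y \in f x) ->
  (#|S| <= \sum_(x <- C) #|f x|)%N.
Proof.
elim: C S => [|a C IH] S HS.
  rewrite big_nil leqn0 cards_eq0; apply/eqP/setP => y; rewrite in_set0.
  by apply/negP => /HS [x].
rewrite big_cons.
apply: leq_trans (_ : #|S :&: f a| + #|S :\: f a| <= _)%N; first by rewrite cardsID.
apply: leq_add; first by rewrite subset_leq_card // subsetIr.
apply: IH => y; rewrite inE => /andP [yf yS].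
case: (HS y yS) => x; rewrite inE => /orP [/eqP xa|xC] yx; last by exists x.
by move: yf; rewrite -xa yx.
Qed.

Lemma pig_block_pig (i : pig) (e : bits n) (x : L) : x \in pig_block i e -> x.1.1 = i.
Proof. by case/mapP => j _ ->. Qed.

Lemma pig_block_sat (i : pig) (e : bits n) (y : pig) : (y < n)%N -> encx y != e ->
  exists2 x, x \in pig_block i e & litT y x.
Proof.
move=> yn ye.
have [j hj] : exists j, encx y j != e j.
  apply/existsP; apply: contraNT ye => /existsPn H0; apply/eqP/ffunP => j.
  by apply/eqP; move: (H0 j); rewrite negbK.
exists ((i, j), ~~ e j); first by apply/mapP; exists j; rewrite ?mem_enum.
by rewrite /litT yn /=; move: hj; case: (encx y j); case: (e j).
Qed.

Variable T : {set {set L}}.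
Hypothesis Kill : forall D, D \in T -> (#|~: P| <= #|relv D| + 2)%N -> killed D.

Lemma exists_q D (X : {set pig}) : D \in T -> (#|X| <= 2)%N ->
  killed D \/ exists q, [/\ q \notin P, q \notin relv D & q \notin X].
Proof.
move=> DT X2; case: (boolP [exists q, [&& q \notin P, q \notin relv D & q \notin X]]).
  by move=> /existsP [q /and3P [? ? ?]]; right; exists q.
move=> /existsPn Hn; left; apply: Kill => //.
have sub : ~: P \subset relv D :|: X.
  apply/subsetP => q; rewrite in_setC in_setU => qP; move: (Hn q); rewrite qP /=.
  by rewrite negb_and !negbK.
apply: leq_trans (subset_leq_card sub) _.
apply: leq_trans (leq_card_setU _ _) _; exact: leq_add.
Qed.

Lemma cardP_le : (#|P| <= n)%N.
Proof.
rewrite -(card_imset _ (@perm_inj _ s0)).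
apply: leq_trans (_ : #|[set x : pig | (x < n)%N]| <= n)%N.
  by apply: subset_leq_card; apply/subsetP => x /imsetP [p pP ->]; rewrite inE I1.
have -> : [set x : pig | (x < n)%N] = ~: [set dummy].
  by apply/setP => x; rewrite !inE neq_dummy.
by rewrite cardsCs setCK cards1 card_ord subn1.
Qed.

Lemma c0_pos : (0 < cD set0)%N.
Proof.
have [q qP] : exists q, q \notin P.
  apply/existsP; apply: contraT; rewrite negb_exists => /forallP Hq.
  have : P = setT by apply/setP => x; move: (Hq x); rewrite negbK inE => ->.
  by move=> PT; move: cardP_le; rewrite PT cardsT card_ord ltnn.
have qr : q \notin relv set0.
  by rewrite inE qP /=; apply/exists_inP => [[l]]; rewrite in_set0.
rewrite (cD_eq qP qr) card_gt0; apply/set0Pn.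
set d := (s0^-1 dummy)%g.
have dP : d \notin P.
  by apply/negP => /I1; rewrite /d permKV /dummy /= ltnn.
exists (tperm q d * s0)%g; rewrite inE; apply/and3P; split.
- rewrite inE; apply/forall_inP => p pP; rewrite permM tpermD //.
  + by apply/eqP => e; move: qP; rewrite e pP.
  + by apply/eqP => e; move: dP; rewrite e pP.
- by apply/forall_inP => l; rewrite in_set0.
- by rewrite permM tpermL /d permKV.
Qed.

Lemma neg_ok (v : var n.+1 n) D : D \in T ->
  (cD ((v, true) |: D) + cD ((v, false) |: D) = cD D)%N.
Proof.
move=> DT; case: (exists_q (X := [set v.1]) DT); first by rewrite cards1.
  by move=> kD; rewrite !killed_cD //; exact: killedU1.
move=> [q [qP qr]]; rewrite in_set1 => qv.
rewrite (cD_eq qP qr) (cD_eq qP (notin_relU1 (l := (v, true)) qr qv)) (cD_eq qP (notin_relU1 (l := (v, false)) qr qv)).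
rewrite /cq.
have E1 : [set pi in Pi | satp pi ((v, true) |: D) && (pi q == dummy)] =
  [set pi in Pi | satp pi D && (pi q == dummy)] :&: [set pi : {perm pig} | litT (pi v.1) (v, true)].
  apply/setP => pi; rewrite !inE satpU1 /=.
  set a := [forall p in P, _]. set b := litT _ _. set c := satp _ _.
  by case: a; case: b; case: c; case: (pi q == dummy).
have E2 : [set pi in Pi | satp pi ((v, false) |: D) && (pi q == dummy)] =
  [set pi in Pi | satp pi D && (pi q == dummy)] :\: [set pi : {perm pig} | litT (pi v.1) (v, true)].
  apply/setP => pi; rewrite !inE satpU1 /=.
  case: (boolP (pi q == dummy)) => pq; last by rewrite !andbF.
  have pvn : (pi v.1 < n)%N.
    rewrite -neq_dummy -(eqP pq); apply/eqP => /perm_inj e.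
    by move: qv; rewrite e eqxx.
  rewrite /litT pvn /=.
  set a := [forall p in P, _]. set b := encx _ _. set c := satp _ _.
  by case: a; case: b; case: c.
by rewrite E1 E2 cardsID.
Qed.

Lemma bound_ok l D : D \in T -> (cD (l |: D) <= cD D)%N.
Proof.
move=> DT; case: (exists_q (X := [set l.1.1]) DT); first by rewrite cards1.
  by move=> kD; rewrite !killed_cD //; exact: killedU1.
move=> [q [qP qr]]; rewrite in_set1 => ql.
rewrite (cD_eq qP qr) (cD_eq qP (notin_relU1 qr ql)).
apply: subset_leq_card; apply/subsetP => pi; rewrite !inE satpU1.
by case/andP => -> /andP [/andP [_ ->] ->].
Qed.

Lemma clause_ok C D : php_clause enc C -> D \in T ->
  (cD D <= \sum_(x <- C) cD (x |: D))%N.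
Proof.
move=> hC DT.
have [X [X2 XC Hcov]] : exists X : {set pig}, [/\ (#|X| <= 2)%N,
   (forall x, x \in C -> x.1.1 \in X) &
   forall q (pi : {perm pig}), q \notin X -> pi q == dummy ->
     exists2 x, x \in C & litT (pi x.1.1) x].
  case: hC => [[a [i [i' [ii' ->]]]] | [_ [i [c [cn ->]]]]].
  - exists [set i; i']; split.
    + by rewrite cards2; case: (i == i').
    + move=> x; rewrite mem_cat => /orP [] /pig_block_pig ->; rewrite !inE eqxx ?orbT //.
    + move=> q pi; rewrite !inE negb_or => /andP [qi qi'] pq.
      have pin : forall k, k != q -> (pi k < n)%N.
        move=> k kq; rewrite -neq_dummy -(eqP pq); apply/eqP => /perm_inj e.
        by move: kq; rewrite e eqxx.
      have hi := pin i (introN eqP (fun e => negP qi (introT eqP (esym e)))).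
      have hi' := pin i' (introN eqP (fun e => negP qi' (introT eqP (esym e)))).
      case: (boolP (encx (pi i) == enc a)) => ea.
      * have ea' : encx (pi i') != enc a.
          apply/negP => /eqP e'; move: ii'; rewrite -(eqP ea) in e'.
          by move/encx_inj: e' => /(_ hi' hi) /perm_inj ->; rewrite eqxx.
        case: (pig_block_sat i' hi' ea') => x xb xs; exists x => //.
        by rewrite mem_cat xb orbT.
        by rewrite (pig_block_pig xb).
      * case: (pig_block_sat i hi ea) => x xb xs; exists x => //.
        by rewrite mem_cat xb.
        by rewrite (pig_block_pig xb).
  - exists [set i]; split.
    + by rewrite cards1.
    + by move=> x /pig_block_pig ->; rewrite inE.
    + move=> q pi; rewrite !inE => qi pq.
      have hi : (pi i < n)%N.
        rewrite -neq_dummy -(eqP pq); apply/eqP => /perm_inj e.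
        by move: qi; rewrite e eqxx.
      have ec : encx (pi i) != c.
        apply: contraNneq cn => <-; rewrite /encx.
        case: insubP => [h _ _|]; last by rewrite hi.
        exact: codom_f.
      case: (pig_block_sat i hi ec) => x xb xs; exists x => //.
      by rewrite (pig_block_pig xb).
case: (exists_q DT X2) => [kD|[q [qP qr qX]]]; first by rewrite killed_cD.
rewrite (cD_eq qP qr).
rewrite big_seq (eq_bigr (fun x => cq (x |: D) q)); last first.
  move=> x xC; apply: cD_eq => //; apply: notin_relU1 => //.
  by apply: contraNneq qX => ->; exact: XC.
rewrite -big_seq; apply: card_cover => pi; rewrite inE => /andP [piPi /andP [spi pq]].
case: (Hcov q pi qX pq) => x xC xs; exists x => //.
by rewrite inE piPi satpU1 xs spi pq.
Qed.

End PS.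

Section Phase1.
Variables (n : nat) (enc : 'I_n -> bits n).
Hypothesis enc_inj : injective enc.
Hypothesis n_gt0 : (0 < n)%N.
Local Notation pig := 'I_n.+1.
Local Notation r := (nbits n).

Definition realH := [set x : pig | (x < n)%N].

Lemma card_realH : #|realH| = n.
Proof.
have -> : realH = ~: [set dummy n] by apply/setP => x; rewrite !inE neq_dummy.
by rewrite cardsCs setCK cards1 card_ord subn1.
Qed.

Definition cnt (S : {set pig}) j b := #|[set x in S | encx enc x j == b]|.
Definition balanced (S : {set pig}) := forall j b, cnt S j b = 0%N \/ (#|S| <= 4 * cnt S j b)%N.

Lemma cnt_split S j b : (cnt S j b + cnt S j (~~ b))%N = #|S|.
Proof.
rewrite /cnt -(cardsID [set x | encx enc x j == b] S); congr (_ + _)%N; apply: eq_card => x; rewrite !inE //.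
by case: (encx enc x j); case: b; rewrite /= ?andbT ?andbF.
Qed.

Definition flip (j : 'I_r) (c : bits n) : bits n := [ffun k => if k == j then ~~ c k else c k].
Lemma flipK j : involutive (flip j).
Proof. by move=> c; apply/ffunP => k; rewrite !ffunE; case: (k == j) => //; rewrite negbK. Qed.

Lemma card_bits : #|[set: bits n]| = (2 ^ r)%N.
Proof. by rewrite cardsT /bits card_ffun card_bool card_ord. Qed.

Section Cube.
Variables (j0 j1 : 'I_r).
Hypothesis j01 : j0 != j1.
Lemma j10 : j1 != j0. Proof. by rewrite eq_sym. Qed.
Definition cube x y := [set c : bits n | (c j0 == x) && (c j1 == y)].

Lemma cube_flip0 x y : #|cube x y| = #|cube (~~ x) y|.
Proof.
rewrite -(card_imset _ (inv_inj (flipK j0))); apply: eq_card => c; apply/imsetP/idP => [[d]|].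
  move=> dc ->; move: dc; rewrite !inE !ffunE eqxx (negbTE j10) => /andP [/eqP -> /eqP ->]; rewrite !eqxx //.
rewrite inE => /andP [/eqP c0 /eqP c1]; exists (flip j0 c); last by rewrite flipK.
by rewrite inE !ffunE eqxx (negbTE j10) c0 c1 negbK !eqxx.
Qed.

Lemma cube_flip1 x y : #|cube x y| = #|cube x (~~ y)|.
Proof.
rewrite -(card_imset _ (inv_inj (flipK j1))); apply: eq_card => c; apply/imsetP/idP => [[d]|].
  move=> dc ->; move: dc; rewrite !inE !ffunE eqxx (negbTE j01) => /andP [/eqP -> /eqP ->]; rewrite !eqxx //.
rewrite inE => /andP [/eqP c0 /eqP c1]; exists (flip j1 c); last by rewrite flipK.
by rewrite inE !ffunE eqxx (negbTE j01) c0 c1 negbK !eqxx.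
Qed.

Lemma cube_card x y : (4 * #|cube x y| = 2 ^ r)%N.
Proof.
have h0 : forall x, #|[set c : bits n | c j0 == x]| = (#|cube x true| + #|cube x false|)%N.
  move=> x'; rewrite -(cardsID [set c : bits n | c j1 == true]); congr (_ + _)%N; apply: eq_card => c;
  by rewrite !inE //; case: (c j1); case: (c j0 == x').
have h1 : #|[set: bits n]| = (#|[set c : bits n | c j0 == true]| + #|[set c : bits n | c j0 == false]|)%N.
  rewrite -(cardsID [set c : bits n | c j0 == true] [set: bits n]); congr (_ + _)%N; apply: eq_card => c;
  by rewrite !inE //; case: (c j0).
rewrite -card_bits h1 !h0.
have e1 := cube_flip0 true true; have e2 := cube_flip0 true false.
have e3 := cube_flip1 true true; have e4 := cube_flip1 false true.
have e5 := cube_flip1 x y; have e6 := cube_flip0 x y.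
simpl in *.
case: x e5 e6; case: y => /= e5 e6; lia.
Qed.

Lemma cube_enc x y :
  (4 * #|[set a in realH | (encx enc a j0 == x) && (encx enc a j1 == y)]| <= 2 ^ r)%N.
Proof.
rewrite -(cube_card x y) leq_mul2l /=.
set A := [set a in realH | _].
have inj : {in A &, injective (encx enc)}.
  move=> a b; rewrite !inE => /andP [an _] /andP [bn _]; exact: encx_inj.
rewrite -(card_in_imset inj); apply: subset_leq_card; apply/subsetP => c /imsetP [a].
by rewrite !inE => /andP [_ h] ->.
Qed.
End Cube.

Lemma two_r : (2 ^ r < 2 * n)%N.
Proof.
rewrite /nbits; case: (ltngtP n 1) => [|n1|->]; last by [].
  by rewrite ltnS leqn0 => /eqP n0; move: n_gt0; rewrite n0.
have := up_log_bounds (isT : (1 < 2)%N) n1; set k := up_log 2 n => /andP [h _].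
have k0 : (0 < k)%N by rewrite /k up_log_gt0 n1.
by rewrite -(prednK k0) expnS ltn_mul2l.
Qed.

Lemma bfalse (e c : bool) : (e == ~~ c) && (e == c) = false.
Proof. by case: e; case: c. Qed.

Lemma btrue (b c : bool) : b != c -> (~~ c == b).
Proof. by case: b; case: c. Qed.
Lemma phase1 : exists S : {set pig}, [/\ S \subset realH, (3 * n <= 4 * #|S|)%N & balanced S].
Proof.
case: (boolP [forall j, forall b, (cnt realH j b == 0%N) || (n <= 4 * cnt realH j b)%N]).
  move=> /forallP h; exists realH; split => //; first by rewrite card_realH; lia.
  move=> j b; move/forallP: (h j) => /(_ b) /orP [/eqP ->|]; first by left.
  by rewrite card_realH; right.
rewrite negb_forall => /existsP [j0]; rewrite negb_forall => /existsP [b0].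
rewrite negb_or -ltnNge => /andP [c0 c1].
set S := [set x in realH | encx enc x j0 == ~~ b0].
have cS0 := cnt_split realH j0 b0; rewrite card_realH in cS0.
have cS1 : #|S| = cnt realH j0 (~~ b0) by [].
exists S; split.
- by apply/subsetP => x; rewrite inE => /andP [].
- rewrite cS1; move: c1 cS0; set a := cnt realH j0 b0; set b := cnt realH j0 (~~ b0); lia.
move=> j b; case: (eqVneq j j0) => [ej|jj0].
  rewrite ej.
  case: (eqVneq b b0) => [eb|bb0].
    rewrite eb; left; apply/eqP; rewrite cards_eq0; apply/eqP/setP => x; rewrite !inE.
    by rewrite -andbA bfalse andbF.
  right; rewrite /cnt; apply: leq_trans (leq_pmull _ _) => //.
  apply: subset_leq_card; apply/subsetP => x; rewrite !inE => /andP [xn /eqP ->].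
  by rewrite xn eqxx /= btrue.
case: (leqP #|S| (4 * cnt S j b)) => [h|h]; first by right.
exfalso.
have hs := cnt_split S j b.
have hc : (cnt S j (~~ b) <= #|[set a in realH | (encx enc a j0 == ~~ b0) && (encx enc a j == ~~ b)]|)%N.
  apply: subset_leq_card; apply/subsetP => x; rewrite !inE => /andP [/andP [-> ->] ->] //.
have j0j : j0 != j by rewrite eq_sym.
have hq := cube_enc j0j (~~ b0) (~~ b).
have ht := two_r.
move: hq ht hc hs h cS1 cS0 c1.
set X := #|[set a in realH | _]|; set A := cnt realH j0 b0; set B := cnt realH j0 (~~ b0).
set C := cnt S j b; set D := cnt S j (~~ b); set E := (2 ^ r)%N.
move: #|S| => F; clear.
move=> *; lia.
Qed.
End Phase1.

Lemma card_pairs (A B : finType) (S : {set A * B}) :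
  #|S| = (\sum_(a : A) #|[set b | (a, b) \in S]|)%N.
Proof.
transitivity (\sum_(a : A) \sum_(b | (a, b) \in S) 1)%N; last first.
  by apply: eq_bigr => a _; rewrite sum1dep_card.
rewrite -sum1_card pair_big_dep /=; apply: eq_bigl => [[a b]] //.
Qed.

Lemma card_ind (X : finType) (A : {set X}) (k : pred X) :
  #|[set x in A | k x]| = (\sum_(x in A) (k x : nat))%N.
Proof.
rewrite -sum1_card big_mkcond [RHS]big_mkcond; apply: eq_bigr => x _.
by rewrite !inE; case: (x \in A); case: (k x).
Qed.

Lemma exists_avg (X : finType) (A : {set X}) (f : X -> nat) :
  A != set0 -> exists2 x, x \in A & (\sum_(y in A) f y <= #|A| * f x)%N.
Proof.
case/set0Pn => x0 x0A.
case: (@arg_maxnP _ x0 (mem A) f x0A) => xm xmA hm.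
exists xm => //; rewrite -sum_nat_const; apply: leq_sum => y yA; exact: hm.
Qed.

Section Greedy.
Variables (n : nat) (enc : 'I_n -> bits n).
Hypothesis enc_inj : injective enc.
Local Notation pig := 'I_n.+1.
Local Notation L := (lit n.+1 n).
Variable H : {set pig}.
Hypothesis Hreal : H \subset realH n.
Hypothesis Hbal : balanced enc H.
Local Notation h := #|H|.
Variable T : {set {set L}}.
Variable w : nat.

Definition Inv (s : {perm pig}) (P : {set pig}) t :=
  [/\ forall p, p \in P -> (s p < n)%N,
      forall x : pig, (x < n)%N -> x \notin s @: P -> x \in H
    & #|P| = (n - h + t)%N].

Definition W (s : {perm pig}) P :=
  [set D in T | (w <= #|relv enc H P D|)%N && ~~ killed enc H s P D].

Definition killer (p y : pig) (D : {set L}) :=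
  [exists l in D, (l.1.1 == p) && (encx enc y l.1.2 != l.2)].

Lemma h_le_n : (h <= n)%N.
Proof. by have := subset_leq_card Hreal; rewrite card_realH. Qed.

Definition news (s : {perm pig}) (p y : pig) := (tperm p (s^-1 y) * s)%g.

Section Step.
Variables (s : {perm pig}) (P : {set pig}) (t : nat).
Hypothesis inv : Inv s P t.

Lemma inv_I1 : forall p, p \in P -> (s p < n)%N. Proof. by case: inv. Qed.
Lemma inv_I2 : forall x : pig, (x < n)%N -> x \notin s @: P -> x \in H. Proof. by case: inv. Qed.
Lemma inv_card : #|P| = (n - h + t)%N. Proof. by case: inv. Qed.

Lemma card_sP : #|s @: P| = #|P|.
Proof. exact: card_imset (@perm_inj _ s). Qed.

Lemma sP_real : s @: P \subset realH n.
Proof. by apply/subsetP => x /imsetP [p pP ->]; rewrite inE inv_I1. Qed.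

Lemma card_HsP : (#|H :&: s @: P| <= t)%N.
Proof.
have h1 := cardsID H (s @: P).
have h2 : realH n :\: H \subset s @: P :\: H.
  apply/subsetP => x; rewrite !inE => /andP [xH xn]; rewrite xH /=.
  by apply: contraR xH => xs; apply: inv_I2.
have h3 := subset_leq_card h2.
have h4 : #|realH n :\: H| = (n - h)%N.
  by rewrite cardsD (setIidPr Hreal) card_realH.
move: h1 h3 h4; rewrite card_sP inv_card setIC; have := h_le_n.
set a := #|H :&: _|; set b := #|_ :\: H|; set c := #|realH n :\: H|; set d := #|H|.
clearbody a b c d; lia.
Qed.

Definition Pairs := [set x : pig * pig | (x.1 \notin P) && ((x.2 < n)%N && (x.2 \notin s @: P))].

Lemma card_Pairs : #|Pairs| = ((h.+1 - t) * (h - t))%N.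
Proof.
have -> : Pairs = setX (~: P) (realH n :\: s @: P).
  by apply/setP => [[a b]]; rewrite !inE /= [(b < n)%N && _]andbC.
rewrite cardsX cardsCs setCK card_ord inv_card cardsD (setIidPr sP_real) card_sP inv_card card_realH.
have := h_le_n; move=> hn; congr (_ * _)%N; lia.
Qed.

Section Pair.
Variables (p y : pig).
Hypothesis pP : p \notin P.
Hypothesis yn : (y < n)%N.
Hypothesis ysP : y \notin s @: P.

Lemma news_P q : q \in P -> news s p y q = s q.
Proof.
move=> qP; rewrite /news permM tpermD //.
  by apply/eqP => e; move: pP; rewrite e qP.
apply/eqP => e; have ys : y = s q by rewrite -e permKV.
by move: ysP; rewrite ys imset_f.
Qed.

Lemma news_p : news s p y p = y.
Proof. by rewrite /news permM tpermL permKV. Qed.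

Lemma news_inv : Inv (news s p y) (p |: P) t.+1.
Proof.
split.
- move=> q; rewrite in_setU1 => /orP [/eqP ->|qP]; first by rewrite news_p.
  by rewrite news_P // inv_I1.
- move=> x xn xs; apply: inv_I2 => //; apply: contra xs => /imsetP [q qP ->].
  by rewrite -news_P //; apply: imset_f; rewrite setU1r.
- by rewrite cardsU1 pP inv_card; have := h_le_n; lia.
Qed.

Lemma W_news : W (news s p y) (p |: P) \subset W s P :\: [set D in W s P | killer p y D].
Proof.
apply/subsetP => D; rewrite !inE => /and3P [DT wD nk].
have relsub : relv enc H (p |: P) D \subset relv enc H P D.
  apply/subsetP => q; rewrite !inE negb_or => /andP [/andP [_ ->] ->] //.
have kk : killed enc H s P D -> killed enc H (news s p y) (p |: P) D.
  case/exists_inP => l lD /andP [lP nl]; apply/exists_inP; exists l => //.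
  by rewrite setU1r //= news_P.
have wD' : (w <= #|relv enc H P D|)%N by apply: leq_trans wD (subset_leq_card relsub).
rewrite DT wD' /=.
have nk' : ~~ killed enc H s P D by apply: contra nk; exact: kk.
rewrite nk' /= andbT.
apply: contra nk => /exists_inP [l lD /andP [/eqP lp ne]]; apply/exists_inP; exists l => //.
rewrite lp setU11 /= news_p /litT yn; exact: ne.
Qed.
End Pair.

Lemma kill_count D : D \in W s P ->
  (w * (h - 4 * t) <= 4 * #|[set x in Pairs | killer x.1 x.2 D]|)%N.
Proof.
rewrite inE => /and3P [DT wD _].
rewrite card_pairs big_distrr /=.
apply: leq_trans (_ : \sum_(a in relv enc H P D) (h - 4 * t) <= _)%N.
  by rewrite sum_nat_const leq_mul2r wD orbT.
rewrite [X in (_ <= X)%N](bigID (mem (relv enc H P D))) /=.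
apply: leq_trans (leq_addr _ _); apply: leq_sum => a.
rewrite inE => /andP [aP /exists_inP [l lD /andP [/eqP la na]]].
have [y0 y0H y0b] : exists2 y0, y0 \in H & encx enc y0 l.1.2 != l.2.
  move: na; rewrite negb_forall_in => /exists_inP [y0 ? ?]; by exists y0.
set Y := [set y in H | encx enc y l.1.2 == ~~ l.2].
have Ysub : Y :\: s @: P \subset [set b | (a, b) \in [set x in Pairs | killer x.1 x.2 D]].
  apply/subsetP => y; rewrite !inE => /andP [ys /andP [yH ye]].
  rewrite aP ys /=.
  have -> : (y < n)%N by move: (subsetP Hreal y yH); rewrite inE.
  apply/exists_inP; exists l => //; rewrite la eqxx /=.
  by move: ye; case: (encx enc y l.1.2); case: (l.2).
have hsub := subset_leq_card Ysub.
have hY : (h <= 4 * #|Y|)%N.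
  case: (Hbal l.1.2 (~~ l.2)) => // c0; exfalso.
  move: c0; rewrite /cnt => /eqP; rewrite cards_eq0 => /eqP/setP/(_ y0).
  rewrite !inE y0H /=; move: y0b; case: (encx enc y0 l.1.2); case: (l.2) => //.
have hYs : (#|Y| <= #|Y :\: s @: P| + t)%N.
  have := cardsID (s @: P) Y.
  have : (#|Y :&: s @: P| <= #|H :&: s @: P|)%N.
    apply: subset_leq_card; apply: setSI; apply/subsetP => z; rewrite inE => /andP [] //.
  have := card_HsP; move=> *; lia.
apply: leq_trans (_ : 4 * #|Y :\: s @: P| <= _)%N; last by rewrite leq_mul2l hsub orbT.
move: hY hYs; move: #|Y| #|Y :\: s @: P| => z v ha hb.
have hc : (4 * z <= 4 * v + 4 * t)%N by rewrite -mulnDr leq_mul2l hb orbT.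
by rewrite leq_subLR addnC; exact: leq_trans ha hc.
Qed.

Lemma step : (t < h)%N -> exists s' P', Inv s' P' t.+1 /\
  (4 * (h.+1 * h) * #|W s' P'| + #|W s P| * w * (h - 4 * t) <= 4 * (h.+1 * h) * #|W s P|)%N.
Proof.
move=> th.
have Pne : Pairs != set0 by rewrite -card_gt0 card_Pairs muln_gt0; apply/andP; split; lia.
have [x xP hx] := exists_avg (fun x => #|[set D in W s P | killer x.1 x.2 D]|) Pne.
move: (xP); rewrite inE => /andP [x1P /andP [x2n x2s]].
exists (news s x.1 x.2), (x.1 |: P); split; first exact: news_inv.
have hW := subset_leq_card (W_news x1P x2n x2s).
have hK : (#|W s P :\: [set D in W s P | killer x.1 x.2 D]| + #|[set D in W s P | killer x.1 x.2 D]| = #|W s P|)%N.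
  rewrite addnC -(cardsID [set D | killer x.1 x.2 D] (W s P)); congr (_ + _)%N;
  apply: eq_card => D; rewrite !inE //.
  by case: (D \in T); case: (w <= _)%N; case: (killed _ _ _ _ _); case: (killer _ _ _).
have hsum : (#|W s P| * (w * (h - 4 * t)) <= 4 * \sum_(x in Pairs) #|[set D in W s P | killer x.1 x.2 D]|)%N.
  have e : (\sum_(x in Pairs) #|[set D in W s P | killer x.1 x.2 D]| =
            \sum_(D in W s P) #|[set x in Pairs | killer x.1 x.2 D]|)%N.
    under eq_bigr => x0 _ do rewrite card_ind.
    under [in RHS]eq_bigr => D _ do rewrite card_ind.
    by rewrite exchange_big.
  rewrite e big_distrr /= -sum_nat_const; apply: leq_sum => D DW.
  exact: kill_count.
have hP : (#|Pairs| <= h.+1 * h)%N.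
  by rewrite card_Pairs; apply: leq_mul; apply: leq_subr.
move: hx hsum hP hW hK.
set S := \sum_(y in Pairs) _.
set K := #|[set D in W s P | killer x.1 x.2 D]|.
set W0 := #|W s P|. set W1 := #|W _ _|. set D0 := #|_ :\: _|.
set Q := #|Pairs|. set M := (h.+1 * h)%N. set V := (w * (h - 4 * t))%N.
move=> hx hsum hP hW hK.
have : (Q * K <= M * K)%N by rewrite leq_mul2r hP orbT.
rewrite mulnA in hsum; nia.
Qed.
End Step.
End Greedy.

Import Order.TTheory GRing.Theory Num.Theory.

Lemma terms_sub (m n : nat) (cs : seq (constr m n)) c :
  List.In c cs -> constr_terms c \subset SA_terms cs.
Proof.
rewrite /SA_terms; elim: cs => [//|a cs IH] /=; rewrite big_cons => [[->|/IH h]].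
  exact: subsetUl.
apply: subset_trans h _; exact: subsetUr.
Qed.

Lemma D_in_terms (m n : nat) (c : constr m n) :
  match c with CClause _ D | CNeg _ D | CBound _ D => D end \in constr_terms c.
Proof. by case: c => [C D|v D|l D] /=; rewrite !inE eqxx. Qed.

Section Sol.
Local Open Scope ring_scope.
Variables (R : realType) (n : nat) (enc : 'I_n -> bits n).
Hypothesis enc_inj : injective enc.
Variables (H : {set 'I_n.+1}) (s0 : {perm 'I_n.+1}) (P : {set 'I_n.+1}).
Hypothesis I1 : forall p, p \in P -> (s0 p < n)%N.
Hypothesis I2 : forall x : 'I_n.+1, (x < n)%N -> x \notin s0 @: P -> x \in H.
Variable cs : seq (constr n.+1 n).
Hypothesis Kill : forall D, D \in SA_terms cs ->
  (#|~: P| <= #|relv enc H P D| + 2)%N -> killed enc H s0 P D.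

Ltac solve_all := first [exact: enc_inj | exact: I1 | exact: I2 | exact: Kill | eassumption].

Lemma solution : exists Z : {set lit n.+1 n} -> R,
  Z set0 = 1 /\ forall c, List.In c cs -> valid_constr enc c -> sat_constr Z c.
Proof.
pose c0 := cD enc H s0 P set0.
have c0p : (0 < c0)%N by apply: c0_pos; solve_all.
have c0R : (c0%:R : R) != 0 by rewrite pnatr_eq0 -lt0n.
exists (fun D => (cD enc H s0 P D)%:R / c0%:R); split.
  by rewrite divff.
move=> c cin hv.
have DT := subsetP (terms_sub cin) _ (D_in_terms c).
case: c cin hv DT => [C D|v D|l D] cin hv DT /=.
- have : (cD enc H s0 P D <= \sum_(x <- C) cD enc H s0 P (x |: D))%N.
    by apply: clause_ok; solve_all.
  rewrite -(ler_nat R) natr_sum => h.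
  rewrite -mulr_suml ler_wpM2r // invr_ge0 ler0n //.
- have : (cD enc H s0 P ((v, true) |: D) + cD enc H s0 P ((v, false) |: D) = cD enc H s0 P D)%N.
    by apply: neg_ok; solve_all.
  by rewrite -mulrDl -natrD => ->.
- apply/andP; split; first by rewrite divr_ge0.
  have : (cD enc H s0 P (l |: D) <= cD enc H s0 P D)%N.
    by apply: bound_ok; solve_all.
  by move=> h; rewrite ler_wpM2r ?invr_ge0 ?ler0n // ler_nat.
Qed.
End Sol.

Section Iter.
Local Open Scope ring_scope.
Variables (R : realType) (n : nat) (enc : 'I_n -> bits n).
Hypothesis enc_inj : injective enc.
Local Notation pig := 'I_n.+1.
Local Notation L := (lit n.+1 n).
Variable H : {set pig}.
Hypothesis Hreal : H \subset realH n.
Hypothesis Hbal : balanced enc H.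
Local Notation h := #|H|.
Variable T : {set {set L}}.
Variable w : nat.
Variable s : nat.
Hypothesis hs : (5 * s <= h)%N.
Hypothesis s_gt0 : (0 < s)%N.

Definition cc : R := w%:R / (4 * (h.+1 * h))%:R.
Definition EE (t : nat) : R := t%:R * h%:R - 2 * t%:R * (t%:R - 1).

Lemma init : Inv H 1%g (realH n :\: H) 0.
Proof.
split.
- by move=> p; rewrite perm1 !inE => /andP [].
- move=> x xn; apply: contraR => xH; apply/imsetP; exists x; last by rewrite perm1.
  by rewrite !inE xn xH.
- by rewrite cardsD (setIidPr Hreal) card_realH addn0.
Qed.

Lemma iterW t : (t <= s)%N -> exists s0 P, Inv H s0 P t /\
   (#|W enc H T w s0 P|%:R <= #|T|%:R * expR (- (cc * EE t)) :> R).
Proof.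
elim: t => [_|t IH ts].
  exists 1%g, (realH n :\: H); split; first exact: init.
  rewrite /EE !mulr0 !mul0r subr0 mulr0 oppr0 expR0 mulr1 ler_nat.
  by apply: subset_leq_card; apply/subsetP => D; rewrite inE => /andP [].
have [s0 [P [inv hW]]] := IH (ltnW ts).
have th : (t < h)%N by lia.
have [s' [P' [inv' hst]]] := step Hreal Hbal T w inv th.
exists s', P'; split => //.
have h4 : (4 * t <= h)%N by lia.
move: hst; set A := (4 * (h.+1 * h))%N; set d := (h - 4 * t)%N.
rewrite -(ler_nat R) natrD !natrM => hst.
have hA : (0 : R) < A%:R by rewrite ltr0n /A !muln_gt0; apply/andP; split => //; lia.
set W0 := (#|W enc H T w s0 P|%:R : R) in hW hst *.
set W1 := (#|W enc H T w s' P'|%:R : R) in hst *.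
have W0p : 0 <= W0 by rewrite /W0 ler0n.
have e1 : W1 <= W0 * (1 - cc * d%:R).
  rewrite -(ler_pM2l hA).
  have -> : A%:R * (W0 * (1 - cc * d%:R)) = A%:R * W0 - W0 * w%:R * d%:R.
    by rewrite /cc -/A; field; rewrite lt0r_neq0.
  have eA : A%:R = 4 * ((h.+1)%:R * h%:R) :> R by rewrite /A !natrM.
  rewrite eA; lra.
have e2 : 1 - cc * d%:R <= expR (- (cc * d%:R)).
  by have := expR_ge1Dx (- (cc * d%:R)); rewrite addrC.
have e3 : W1 <= W0 * expR (- (cc * d%:R)).
  by apply: le_trans e1 _; apply: ler_wpM2l.
apply: le_trans e3 _.
have -> : cc * EE t.+1 = cc * EE t + cc * d%:R.
  rewrite /EE /d natrB // natrM -mulrDr; congr (_ * _).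
  rewrite -addn1 natrD; ring.
rewrite opprD expRD mulrA ler_wpM2r // ?expR_ge0 //.
Qed.
End Iter.

Lemma numeric (n h s w : nat) : (3 * n <= 4 * h)%N -> (41 <= n)%N -> s = (h %/ 5)%N ->
  w = (h - s - 1)%N ->
  (n * (4 * (h.+1 * h)) <= 80 * (w * (s * (h + 2) - 2 * s * s)))%N.
Proof.
move=> h1 h2 -> ->.
have := divn_eq h 5; have := ltn_pmod h (isT : (0 < 5)%N).
move: (h %/ 5)%N (h %% 5)%N => q r hr hq.
nia.
Qed.

Section Construct.
Local Open Scope ring_scope.
Variables (R : realType) (n : nat) (enc : 'I_n -> bits n).
Hypothesis enc_inj : injective enc.
Hypothesis n_gt0 : (0 < n)%N.
Variable T : {set {set lit n.+1 n}}.
Hypothesis hT : #|T|%:R + 1 < expR (n%:R / 80) :> R.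

Lemma expR_small (x : R) : 0 <= x -> x <= 1 / 2 -> expR x <= 2.
Proof.
move=> x0 x1.
have := expR_ge1Dx (- x); rewrite expRN => h.
have hE := expR_gt0 x.
have h2 : expR x * (1 - x) <= 1.
  by have := ler_wpM2l (ltW hE) h; rewrite mulfV ?gt_eqF //.
nra.
Qed.

Lemma construct : exists (H : {set 'I_n.+1}) (s0 : {perm 'I_n.+1}) (P : {set 'I_n.+1}),
  [/\ forall p, p \in P -> (s0 p < n)%N,
      forall x : 'I_n.+1, (x < n)%N -> x \notin s0 @: P -> x \in H &
      forall D, D \in T -> (#|~: P| <= #|relv enc H P D| + 2)%N -> killed enc H s0 P D].
Proof.
case: (eqVneq T set0) => [T0|Tn0].
  exists (realH n), 1%g, set0; split.
  - by move=> p; rewrite in_set0.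
  - by move=> x xn _; rewrite inE.
  - by move=> D; rewrite T0 in_set0.
have T1 : (1 <= #|T|)%N by rewrite card_gt0.
have n41 : (41 <= n)%N.
  rewrite leqNgt; apply/negP => hn.
  have : expR (n%:R / 80) <= 2 :> R.
    apply: expR_small; first by rewrite divr_ge0.
    have : (n%:R : R) <= 40%:R by rewrite ler_nat; lia.
    lra.
  have : (1 : R) <= #|T|%:R by rewrite ler1n.
  move=> ha hb; have hc := lt_le_trans hT hb.
  by move: (#|T|%:R : R) ha hc => u ha hc; lra.
have [H [Hreal h34 Hbal]] := phase1 enc_inj n_gt0.
set h := #|H| in h34.
set s := (h %/ 5)%N.
set w := (h - s - 1)%N.
have hs : (5 * s <= h)%N by rewrite mulnC leq_trunc_div.
have sp : (0 < s)%N by rewrite divn_gt0 //; lia.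
have [s0' [P [[I1 I2 cP] hW]]] := iterW R Hreal Hbal T w hs sp (leqnn s).
exists H, s0', P; split => //.
have W0 : W enc H T w s0' P = set0.
  apply/eqP; rewrite -cards_eq0; apply/eqP.
  have hnum := numeric h34 n41 (erefl s) (erefl w).
  have hc : n%:R / 80 <= cc R H w * EE R H s :> R.
    rewrite /cc /EE.
    have hpos : (0 : R) < (4 * (h.+1 * h))%:R by rewrite ltr0n !muln_gt0; apply/andP; split => //; lia.
    have e : (s%:R * h%:R - 2 * s%:R * (s%:R - 1)) = ((s * (h + 2) - 2 * s * s)%N)%:R :> R.
      rewrite natrB; last by nia.
      by rewrite !natrM natrD; ring.
    rewrite -/h e mulrAC -natrM ler_pdivrMr // mulrAC ler_pdivlMr // -!natrM ler_nat.
    by rewrite [X in (_ <= X)%N]mulnC.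
  have : (#|W enc H T w s0' P|%:R : R) < 1.
    apply: le_lt_trans hW _.
    have hE : expR (- (cc R H w * EE R H s)) <= expR (- (n%:R / 80)) :> R.
      by rewrite ler_expR lerN2.
    have hE0 := expR_gt0 (- (cc R H w * EE R H s)).
    have hE1 : expR (n%:R / 80) * expR (- (n%:R / 80)) = 1 :> R.
      by rewrite -expRD subrr expR0.
    have hE2 := expR_gt0 (- (n%:R / 80) : R).
    apply: le_lt_trans (ler_wpM2l (ler0n _ _) hE) _.
    apply: (@lt_le_trans _ _ (expR (n%:R / 80) * expR (- (n%:R / 80)))); last by rewrite hE1.
    rewrite ltr_pM2r //.
    by apply: le_lt_trans hT; rewrite lerDl.
  by rewrite -[X in _ < X]/(1%:R) ltr_nat ltnS leqn0 => /eqP.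
move=> D DT hD.
apply: contraT => nk.
have : D \in W enc H T w s0' P.
  rewrite inE DT nk andbT /=.
  move: hD; rewrite cardsCs setCK card_ord cP.
  have := subset_leq_card Hreal; rewrite card_realH -/h => hn.
  rewrite /w; move: #|relv enc H P D| => r; clearbody s h; lia.
by rewrite W0 in_set0.
Qed.
End Construct.
Unset Implicit Arguments.
Local Open Scope ring_scope.

Theorem theorem4 (R : realType) (n : nat) (hn : (1 <= n)%N)
  (enc : 'I_n -> bits n) (enc_inj : injective enc)
  (cs : seq (constr n.+1 n)) :
  SA_refutation R enc cs ->
  (6 / 5 : R) `^ (n%:R / 16) - 1 <= (#|SA_terms cs|)%:R.
Proof.
move=> [hv hZ].
have hp : (6 / 5 : R) `^ (n%:R / 16) <= expR (n%:R / 80).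
  rewrite /powR ifF; last by apply/negbTE; apply: lt0r_neq0; rewrite divr_gt0.
  rewrite ler_expR.
  have hl : ln (6 / 5 : R) <= 1 / 5.
    have -> : (6 / 5 : R) = 1 + 1 / 5 by field.
    by apply: le_ln1Dx; lra.
  have n0 : (0 : R) <= n%:R / 16 by rewrite divr_ge0.
  have := ler_wpM2l n0 hl.
  have -> : n%:R / 16 * (1 / 5) = n%:R / 80 :> R by field.
  by [].
rewrite leNgt; apply/negP => hlt.
have hT : (#|SA_terms cs|%:R + 1 : R) < expR (n%:R / 80).
  move: hlt hp; move: (#|SA_terms cs|%:R : R) => u; lra.
have [H [s0 [P [I1 I2 Kill]]]] := construct enc_inj hn hT.
have [Z [Z0 HZ]] := solution R enc_inj I1 I2 Kill.
apply: hZ; exists Z; split => // c cin; exact: HZ cin (hv c cin).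
Qed.
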